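(* Let $\hbar,m_0,c>0$, put $E_0=m_0c^2$ and $l_0=\frac{\hbar}{m_0c}$. Let $f_n\in\mathbb{C}$ be arbitrary constants, indexed by the positive integers $n$ with $n l_0<1$, and define for $x,t\in\mathbb{R}$ $$ Y(x,t)=\exp\left(-\frac{iE_0t}{\hbar}\right)\sum_{\substack{n\geq 1\\ n l_0<1}}f_n\exp\left(i\frac{E_0l_0^2n^2 t}{2\hbar\sqrt{\left|l_0^2n^2-1\right|}}\right)e^{-nx}. $$ Then $Y$ satisfies $$ i\hbar\frac{\partial Y}{\partial t}=E_0Y+\frac{E_0}{2}\sum^{\infty}_{n=0}(-1)^{n+1}\binom{-1/2}{n}\left(\frac{\hbar}{m_0c}\right)^{2n+2}\frac{\partial^{2n+2}Y}{\partial x^{2n+2}} $$ for all $x,t\in\mathbb{R}$ (the series on the right converging), and $Y(x,0)=\sum_{n\geq1,\,nl_0<1}f_ne^{-nx}$.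
   Context: $\binom{-1/2}{n}=\frac{(-1/2)(-3/2)\cdots(-1/2-n+1)}{n!}$ denotes the generalized binomial coefficient. The quantity $l_0$ is called the Compton wavelength of the particle. *)

(* Defs.v *)
From Stdlib Require Import Reals.
From Coquelicot Require Import Coquelicot.
Open Scope R_scope.

Definition Cexp (z : C) : C :=
  (exp (Re z) * cos (Im z), exp (Re z) * sin (Im z)).

Definition is_derive_RC (f : R -> C) (x : R) (l : C) : Prop :=
  @is_derive R_AbsRing C_R_NormedModule f x l.

Inductive nth_deriv (f : R -> C) : nat -> (R -> C) -> Prop :=
| nth_deriv_O : nth_deriv f 0 f
| nth_deriv_S : forall k g h,
    nth_deriv f k g -> (forall x, is_derive_RC g x (h x)) ->
    nth_deriv f (S k) h.

Fixpoint gbinom (a : R) (n : nat) : R :=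
  match n with
  | O => 1
  | S k => gbinom a k * (a - INR k) / INR (S k)
  end.

Definition admissible (l0 : R) (n : nat) : bool :=
  (1 <=? n)%nat && (if Rlt_dec (INR n * l0) 1 then true else false).

(* a bound N with every admissible n <= N (for l0 > 0) *)
Definition idx_bound (l0 : R) : nat := Z.to_nat (up (/ l0)).

Definition adm_sum (l0 : R) (F : nat -> C) : C :=
  sum_n (fun n => if admissible l0 n then F n else RtoC 0) (idx_bound l0).

Definition Ysol (hbar m0 c : R) (f : nat -> C) (x t : R) : C :=
  let E0 := m0 * c ^ 2 in
  let l0 := hbar / (m0 * c) in
  (Cexp (0%R, (- (E0 * t / hbar))%R) *
   adm_sum l0 (fun n =>
     f n * Cexp (0%R, (E0 * l0 ^ 2 * INR n ^ 2 * t
                     / (2 * hbar * sqrt (Rabs (l0 ^ 2 * INR n ^ 2 - 1))))%R)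
         * RtoC (exp (- INR n * x)%R)))%C.

(* Main.v *)
Require Import Defs.
From Stdlib Require Import Reals Lra Lia.
From Coquelicot Require Import Coquelicot.
Open Scope R_scope.

Definition ab (k : nat) : R := gbinom (-1/2) k * (-1) ^ k.

Lemma ab_S k : ab (S k) = ab k * (INR k + /2) / INR (S k).
Proof.
  unfold ab. change (gbinom (-1/2) (S k)) with (gbinom (-1/2) k * (-1/2 - INR k) / INR (S k)).
  rewrite <- tech_pow_Rmult. field. apply not_0_INR; lia.
Qed.

Lemma ab_bound k : 0 < ab k <= 1.
Proof.
  induction k.
  - unfold ab; simpl; lra.
  - rewrite ab_S, S_INR. pose proof (pos_INR k).
    assert (0 < (INR k + /2) / (INR k + 1) <= 1).
    { split. apply Rdiv_lt_0_compat; lra.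
      apply Rmult_le_reg_r with (INR k + 1). lra.
      unfold Rdiv. rewrite Rmult_assoc, Rinv_l by lra. lra. }
    unfold Rdiv in *. rewrite Rmult_assoc.
    set (t := (INR k + / 2) * / (INR k + 1)) in *. split; nra.
Qed.

Lemma pow_le1 x n : 0 <= x <= 1 -> 0 <= x ^ n <= 1.
Proof. intros H. induction n as [|n IH]; simpl; [lra|]. destruct IH, H. split; nra. Qed.

Lemma ab_CV u : Rabs u < 1 -> Rbar_lt (Rabs u) (CV_radius ab).
Proof.
  intros Hu.
  destruct (CV_radius_bounded ab) as [Hub _].
  assert (Hr : Rbar_le ((Rabs u + 1)/2) (CV_radius ab)).
  { apply Hub. exists 1. intros n.
    rewrite Rabs_mult. pose proof (ab_bound n).
    rewrite (Rabs_pos_eq (ab n)) by lra.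
    rewrite <- RPow_abs.
    pose proof (Rabs_pos u).
    assert (0 <= Rabs ((Rabs u + 1) / 2) ^ n <= 1).
    { apply pow_le1. split. apply Rabs_pos. rewrite Rabs_pos_eq; lra. }
    nra. }
  pose proof (Rabs_pos u).
  destruct (CV_radius ab) as [r| |]; simpl in *; try easy. lra.
Qed.

Ltac toR := match goal with |- ?a = ?b => change (@eq R a b) end.

Lemma pser_R (a : nat -> R) x l : is_pseries a x l -> is_series (fun k => a k * x ^ k) l.
Proof.
  intros H. apply is_series_ext with (2 := H). intros n. rewrite pow_n_pow.
  change (scal (x^n) (a n)) with (x^n * a n). toR. ring.
Qed.

Lemma ab_ode v : Rabs v < 1 -> PSeries ab v = 2 * (1 - v) * PSeries (PS_derive ab) v.
Proof.
  intros Hv.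
  set (P := PSeries (PS_derive ab) v).
  assert (H1 : is_series (fun k => PS_derive ab k * v ^ k) P).
  { apply pser_R. apply PSeries_correct. apply ex_pseries_derive. now apply ab_CV. }
  assert (H4 : is_series (fun k => (INR k + /2) * ab k * v ^ k) P).
  { apply is_series_ext with (2 := H1). intros k. unfold PS_derive.
    toR. rewrite ab_S. field. apply not_0_INR; lia. }
  assert (H2 : is_series (fun k => INR (S k) * ab (S k) * v ^ (S k)) (v * P)).
  { apply is_series_ext with (2 := is_series_scal_l v _ _ H1). intros k.
    unfold PS_derive. change (scal v (INR (S k) * ab (S k) * v ^ k) = INR (S k) * ab (S k) * v ^ S k).
    change (v * (INR (S k) * ab (S k) * v ^ k) = INR (S k) * ab (S k) * v ^ S k). simpl; ring. }
  assert (H3 : is_series (fun k => INR k * ab k * v ^ k) (v * P)).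
  { apply is_series_decr_1.
    match goal with |- is_series _ ?l => replace l with (v*P) end. exact H2.
    simpl. change (v * P = v * P + - (0 * ab 0 * 1)). ring. }
  pose proof (is_series_minus _ _ _ _ H4 H3) as H5.
  assert (H6 : is_series (fun k => ab k * v ^ k) (2 * (P - v * P))).
  { apply is_series_ext with (2 := is_series_scal_l 2 _ _ H5). intros k.
    change (2 * ((INR k + / 2) * ab k * v ^ k + - (INR k * ab k * v ^ k)) = ab k * v ^ k).
    field. }
  change (P - v * P) with (plus P (opp (v * P))) in H6.
  unfold PSeries. rewrite (is_series_unique _ _ H6). change (2 * (P + - (v * P)) = 2 * (1 - v) * P). ring.
Qed.

Lemma is_derive_eqR (f : R -> R) x l l' : is_derive f x l -> l = l' -> is_derive f x l'.
Proof. intros H E; subst; exact H. Qed.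

Lemma g_const u : 0 <= u < 1 -> PSeries ab u ^ 2 * (1 - u) = 1.
Proof.
  intros Hu.
  set (g := fun w => PSeries ab w ^ 2 * (1 - w)).
  assert (Hd : forall w, Rabs w < 1 -> is_derive g w 0).
  { intros w Hw.
    assert (D1 := is_derive_PSeries ab w (ab_CV w Hw)).
    assert (D2 := is_derive_pow _ 2 _ _ D1).
    assert (D3 : is_derive (fun x => 1 - x) w (-1)).
    { auto_derive; auto; ring. }
    assert (D4 := is_derive_mult _ _ _ _ _ D2 D3 Rmult_comm).
    unfold g. eapply is_derive_ext; [|eapply is_derive_eqR; [exact D4|]]. intros t; reflexivity.
    change (INR 2 * PSeries (PS_derive ab) w * PSeries ab w ^ 1 * (1 - w) + PSeries ab w ^ 2 * (-1) = 0).
    rewrite (ab_ode w Hw). simpl. ring. }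
  destruct (MVT_gen g 0 u (fun _ => 0)) as [c [_ Hc]].
  - intros x Hx. apply Hd. rewrite Rmin_left, Rmax_right in Hx by lra.
    rewrite Rabs_pos_eq; lra.
  - intros x Hx. rewrite Rmin_left, Rmax_right in Hx by lra.
    apply continuity_pt_filterlim. apply (ex_derive_continuous (K:=R_AbsRing) (V:=R_NormedModule) g x).
    exists 0. apply Hd. rewrite Rabs_pos_eq; lra.
  - assert (g u = g 0) by lra. unfold g in H. rewrite H, PSeries_0. unfold ab. simpl. ring.
Qed.

Lemma binom_series u : 0 <= u < 1 -> is_series (fun k => ab k * u ^ k) (/ sqrt (1 - u)).
Proof.
  intros Hu.
  assert (Hex : ex_series (fun k => ab k * u ^ k)).
  { apply ex_pseries_R. apply CV_radius_inside. apply ab_CV. rewrite Rabs_pos_eq; lra. }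
  assert (Hpos : 0 <= PSeries ab u).
  { rewrite <- (PSeries_const_0 u). unfold PSeries. apply Series_le; auto.
    intros n. rewrite Rmult_0_l. split. lra. pose proof (ab_bound n). pose proof (pow_le u n). nra. }
  pose proof (g_const u Hu) as G.
  replace (/ sqrt (1 - u)) with (PSeries ab u). now apply Series_correct.
  rewrite <- sqrt_inv. rewrite <- (sqrt_pow2 (PSeries ab u)) by auto.
  f_equal. assert (1 - u > 0) by lra. field_simplify_eq; [|lra]. lra.
Qed.

Lemma sum_n_RtoC (a : nat -> R) N : sum_n (fun k => RtoC (a k)) N = RtoC (sum_n a N).
Proof.
  induction N. rewrite !sum_O; auto. rewrite !sum_Sn, IHN.
  change (@plus C_AbelianMonoid) with Cplus. rewrite RtoC_plus. reflexivity.
Qed.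

Lemma is_series_RtoC a l : is_series a l -> is_series (fun k => RtoC (a k)) (RtoC l).
Proof.
  unfold is_series. intros H.
  eapply filterlim_ext. intros n; symmetry; apply sum_n_RtoC.
  eapply filterlim_comp; [exact H|].
  apply filterlim_locally. intros eps. exists eps. intros y Hy.
  split; [exact Hy| apply ball_center].
Qed.

Lemma is_series_C0 : is_series (fun _ : nat => RtoC 0) (RtoC 0).
Proof.
  apply is_series_ext with (fun k => RtoC ((fun _ => 0) k)). reflexivity.
  apply is_series_RtoC. unfold is_series.
  eapply filterlim_ext. intros n. symmetry. instantiate (1 := fun _ => 0).
  induction n. rewrite sum_O. reflexivity. rewrite sum_Sn, IHn. change (0 + 0 = 0). ring.
  apply filterlim_const.
Qed.

Lemma adm_sum_lin l0 (a b : C) F G :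
  (a * adm_sum l0 F + b * adm_sum l0 G)%C = adm_sum l0 (fun n => a * F n + b * G n)%C.
Proof.
  unfold adm_sum. induction (idx_bound l0).
  - rewrite !sum_O. destruct (admissible l0 0); ring.
  - rewrite !sum_Sn, <- IHn. change (@plus C_AbelianMonoid) with Cplus.
    destruct (admissible l0 (S n)); ring.
Qed.

Lemma adm_sum_mult_l l0 (a : C) F :
  (a * adm_sum l0 F)%C = adm_sum l0 (fun n => a * F n)%C.
Proof.
  unfold adm_sum. induction (idx_bound l0).
  - rewrite !sum_O. destruct (admissible l0 0); ring.
  - rewrite !sum_Sn, <- IHn. change (@plus C_AbelianMonoid) with Cplus.
    destruct (admissible l0 (S n)); ring.
Qed.

Lemma adm_sum_ext l0 F G : (forall n, admissible l0 n = true -> F n = G n) ->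
  adm_sum l0 F = adm_sum l0 G.
Proof.
  intros H. unfold adm_sum. apply sum_n_ext. intros n.
  destruct (admissible l0 n) eqn:E; auto.
Qed.

Lemma adm_sum_derive l0 (G : nat -> R -> C) (dG : nat -> C) t :
  (forall n, admissible l0 n = true -> is_derive_RC (G n) t (dG n)) ->
  is_derive_RC (fun s => adm_sum l0 (fun n => G n s)) t (adm_sum l0 dG).
Proof.
  intros H. unfold adm_sum, is_derive_RC in *.
  assert (Hn : forall n, is_derive (K:=R_AbsRing) (V:=C_R_NormedModule)
     (fun s => if admissible l0 n then G n s else RtoC 0) t
     (if admissible l0 n then dG n else RtoC 0)).
  { intros n. destruct (admissible l0 n) eqn:E. now apply H.
    apply (is_derive_const (K:=R_AbsRing) (V:=C_R_NormedModule) (RtoC 0) t). }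
  induction (idx_bound l0).
  - rewrite (sum_O (G:=C_AbelianMonoid) (fun n => if admissible l0 n then dG n else RtoC 0)).
    eapply is_derive_ext; [|exact (Hn 0%nat)]. intros s. now rewrite sum_O.
  - rewrite (sum_Sn (G:=C_AbelianMonoid) (fun n => if admissible l0 n then dG n else RtoC 0)).
    eapply is_derive_ext; [|exact (is_derive_plus _ _ _ _ _ IHn (Hn (S n)))].
    intros s. rewrite sum_Sn. reflexivity.
Qed.

Lemma adm_sum_series l0 (A : nat -> nat -> C) (L : nat -> C) :
  (forall n, admissible l0 n = true -> is_series (fun k => A k n) (L n)) ->
  is_series (fun k => adm_sum l0 (fun n => A k n)) (adm_sum l0 L).
Proof.
  intros H. unfold adm_sum.
  assert (Hn : forall n, is_series (fun k => if admissible l0 n then A k n else RtoC 0)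
     (if admissible l0 n then L n else RtoC 0)).
  { intros n. destruct (admissible l0 n) eqn:E. now apply H. exact is_series_C0. }
  induction (idx_bound l0).
  - eapply is_series_ext; [|rewrite sum_O; exact (Hn 0%nat)]. intros k. now rewrite sum_O.
  - rewrite sum_Sn. eapply is_series_ext; [|exact (is_series_plus _ _ _ _ IHn (Hn (S n)))].
    intros k. rewrite sum_Sn. reflexivity.
Qed.

Lemma is_derive_eqC (f : R -> C) x l l' : is_derive_RC f x l -> l = l' -> is_derive_RC f x l'.
Proof. intros H E; subst; exact H. Qed.

Lemma scal_CR (r : R) (v : C) : @scal R_AbsRing C_R_NormedModule r v = (RtoC r * v)%C.
Proof.
  destruct v as [v1 v2]. unfold Cmult, RtoC. simpl.
  change (scal r (v1, v2)) with ((r * v1, r * v2)).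
  f_equal; ring.
Qed.

Lemma der_scal (phi : R -> R) phi' t (v : C) :
  is_derive phi t phi' -> is_derive_RC (fun s => RtoC (phi s) * v)%C t (RtoC phi' * v)%C.
Proof.
  intros H. unfold is_derive_RC.
  eapply is_derive_ext; [| rewrite <- scal_CR; apply (is_derive_scal_l (V:=C_R_NormedModule) phi t phi' v H)].
  intros s. apply scal_CR.
Qed.

Lemma Cexp_decomp (a : R) (v : C) :
  (Cexp (0%R, a) * v = RtoC (cos a) * v + RtoC (sin a) * (Ci * v))%C.
Proof.
  destruct v as [v1 v2]. unfold Cexp, Cmult, Cplus, RtoC, Ci. simpl. rewrite exp_0.
  f_equal; ring.
Qed.

Lemma der_cexp (c t : R) (v : C) :
  is_derive_RC (fun s => Cexp (0%R, (c * s)%R) * v)%C t (Ci * RtoC c * Cexp (0%R, (c * t)%R) * v)%C.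
Proof.
  unfold is_derive_RC.
  eapply is_derive_ext. intros s. symmetry. apply Cexp_decomp.
  eapply is_derive_eqC. unfold is_derive_RC.
  apply (is_derive_plus (K:=R_AbsRing) (V:=C_R_NormedModule)).
  apply (der_scal (fun s => cos (c * s)) (- sin (c * t) * c)). auto_derive; auto; ring.
  apply (der_scal (fun s => sin (c * s)) (cos (c * t) * c)). auto_derive; auto; ring.
  destruct v as [v1 v2]. match goal with |- context [@plus ?G] => change (@plus G) with Cplus end.
  unfold Cexp, Cmult, Cplus, RtoC, Ci. simpl. rewrite exp_0. f_equal; ring.
Qed.

Lemma Cexp_mul a b : (Cexp (0%R, a) * Cexp (0%R, b) = Cexp (0%R, (a + b)%R))%C.
Proof.
  unfold Cexp, Cmult. simpl. rewrite exp_0, cos_plus, sin_plus. f_equal; ring.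
Qed.

Lemma Cexp00 : Cexp (0%R, 0%R) = RtoC 1.
Proof. unfold Cexp, RtoC. simpl. rewrite exp_0, cos_0, sin_0. f_equal; ring. Qed.

Lemma adm_facts l0 n : 0 < l0 -> admissible l0 n = true ->
  0 <= l0 ^ 2 * INR n ^ 2 < 1.
Proof.
  intros Hl H. unfold admissible in H. apply andb_prop in H as [_ H].
  destruct (Rlt_dec (INR n * l0) 1) as [H1|]; [|discriminate].
  pose proof (pos_INR n).
  assert (0 <= INR n * l0) by nra. split; nra.
Qed.

Lemma is_series_eqC' (a : nat -> C) l l' : is_series a l -> l = l' -> is_series a l'.
Proof. intros H E; subst; exact H. Qed.

Ltac toC := match goal with |- ?a = ?b => change (@eq C a b) end.

Lemma is_series_eqR (a : nat -> R) l l' : is_series a l -> l = l' -> is_series a l'.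
Proof. intros H E; subst; exact H. Qed.

Theorem theorem2 (hbar m0 c : R) (f : nat -> C) :
  0 < hbar -> 0 < m0 -> 0 < c ->
  let E0 := m0 * c ^ 2 in
  let l0 := hbar / (m0 * c) in
  let Y := Ysol hbar m0 c f in
  (* time derivative of Y exists everywhere *)
  (exists Yt : R -> R -> C,
     forall x t, is_derive_RC (fun s => Y x s) t (Yt x t) /\
     (* x-derivatives of all orders exist, and the series converges
        to the right-hand side of the equation *)
     exists D : nat -> R -> C,
       (forall k, nth_deriv (fun y => Y y t) k (D k)) /\
       is_series
         (fun k : nat =>
            (RtoC (E0 / 2 * (-1) ^ (k + 1) * gbinom (-1/2) k
                   * (hbar / (m0 * c)) ^ (2 * k + 2))
             * D (2 * k + 2)%nat x)%C)
         (Ci * RtoC hbar * Yt x t - RtoC E0 * Y x t)%C) /\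
  (forall x, Y x 0 =
     adm_sum l0 (fun n => (f n * RtoC (exp (- INR n * x)%R))%C)).
Proof.
  intros Hh Hm Hc. cbv zeta.
  set (E0 := m0 * c ^ 2). set (l0 := hbar / (m0 * c)).
  assert (Hl0 : 0 < l0) by (unfold l0; apply Rdiv_lt_0_compat; nra).
  set (sq := fun n => sqrt (Rabs (l0 ^ 2 * INR n ^ 2 - 1))).
  set (cc := fun n => (- (E0 / hbar) + E0 * l0 ^ 2 * INR n ^ 2 / (2 * hbar * sq n))%R).
  set (w := fun x n => (f n * RtoC (exp (- INR n * x)))%C).
  assert (Yrep : forall x s, Ysol hbar m0 c f x s =
     adm_sum l0 (fun n => Cexp (0%R, (cc n * s)%R) * w x n)%C).
  { intros x s. unfold Ysol. cbv zeta. fold E0 l0.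
    rewrite adm_sum_mult_l. apply adm_sum_ext. intros n _.
    unfold w.
    match goal with |- (Cexp (0%R, ?a) * (f n * Cexp (0%R, ?b) * ?r))%C = _ =>
      transitivity ((Cexp (0%R, a) * Cexp (0%R, b)) * (f n * r))%C; [ring|] end.
    rewrite Cexp_mul. f_equal. f_equal. f_equal. unfold cc, sq. unfold Rdiv. ring. }
  split.
  2:{ intros x. rewrite Yrep. apply adm_sum_ext. intros n _. rewrite Rmult_0_r, Cexp00.
      unfold w. ring. }
  exists (fun x t => adm_sum l0 (fun n => Ci * RtoC (cc n) * Cexp (0%R, (cc n * t)%R) * w x n)%C).
  intros x t. split.
  { eapply is_derive_ext. intros s. symmetry. apply Yrep.
    apply adm_sum_derive. intros n _. apply der_cexp. }
  set (u := fun n => (Cexp (0%R, (cc n * t)%R) * f n)%C).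
  set (Dform := fun k y => adm_sum l0 (fun n => RtoC ((- INR n) ^ k * exp (- INR n * y)) * u n)%C).
  assert (HD0 : forall y, Ysol hbar m0 c f y t = Dform 0%nat y).
  { intros y. rewrite Yrep. apply adm_sum_ext. intros n _. unfold w, u. simpl pow.
    rewrite Rmult_1_l. ring. }
  assert (HDS : forall k y, is_derive_RC (Dform k) y (Dform (S k) y)).
  { intros k y. unfold Dform. apply adm_sum_derive. intros n _.
    apply (der_scal (fun s => (- INR n) ^ k * exp (- INR n * s))).
    auto_derive; auto. simpl pow. ring. }
  exists (fun k => match k with O => fun y => Ysol hbar m0 c f y t | S _ => Dform k end).
  split.
  { intros k. induction k.
    - apply nth_deriv_O.
    - eapply nth_deriv_S. exact IHk. intros y. destruct k.
      + eapply is_derive_ext. intros s. symmetry. apply HD0. apply HDS.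
      + apply HDS. }
  set (X := fun n => (Cexp (0%R, (cc n * t)%R) * w x n)%C).
  set (LL := fun n => (- hbar * cc n - E0)%R).
  set (coef := fun k => (E0 / 2 * (-1) ^ (k + 1) * gbinom (-1/2) k * l0 ^ (2 * k + 2))%R).
  eapply is_series_ext; [| eapply is_series_eqC';
     [apply (adm_sum_series l0 (fun k n => RtoC (coef k * (- INR n) ^ (2 * k + 2)) * X n)%C
                               (fun n => RtoC (LL n) * X n)%C) | ]].
  - intros k. assert (E : (2 * k + 2)%nat = S (2 * k + 1)) by lia.
    unfold coef. rewrite E. cbv beta iota.
    unfold Dform. rewrite adm_sum_mult_l. apply adm_sum_ext. intros n _.
    unfold X, w, u. rewrite !RtoC_mult. ring.
  - intros n Hn. destruct (adm_facts l0 n Hl0 Hn) as [U0 U1].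
    set (U := l0 ^ 2 * INR n ^ 2) in *.
    assert (HR : is_series (fun k => coef k * (- INR n) ^ (2 * k + 2)) (LL n)).
    { eapply is_series_ext; [| eapply is_series_eqR;
        [apply (is_series_scal_r (- E0 / 2 * U) _ _ (binom_series U (conj U0 U1)))|]].
      - intros k. toR.
        unfold ab, coef, U.
        replace (2 * k + 2)%nat with (2 * (k + 1))%nat by lia.
        rewrite !pow_mult. replace ((- INR n) ^ 2) with (INR n ^ 2) by ring.
        rewrite Rpow_mult_distr, !pow_add. toR. unfold Rdiv. ring.
      - toR.
        unfold LL, cc, sq. fold U. rewrite Rabs_left by lra.
        replace (- (U - 1)) with (1 - U) by ring.
        assert (sqrt (1 - U) > 0) by (apply sqrt_lt_R0; lra).
        unfold U in *. field. split; lra. }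
    eapply is_series_ext; [|eapply is_series_eqC'; [apply (is_series_scal_l (X n) _ _ (is_series_RtoC _ _ HR))|]].
    + intros k. cbv beta. change (scal (X n) (RtoC (coef k * (- INR n) ^ (2 * k + 2)))) with (X n * RtoC (coef k * (- INR n) ^ (2 * k + 2)))%C. toC. ring.
    + change (scal (X n) (RtoC (LL n))) with (X n * RtoC (LL n))%C. toC. ring.
  - rewrite Yrep.
    transitivity ((Ci * RtoC hbar) * adm_sum l0 (fun n => Ci * RtoC (cc n) * Cexp (0%R, (cc n * t)%R) * w x n)
        + (- RtoC E0) * adm_sum l0 (fun n => Cexp (0%R, (cc n * t)%R) * w x n))%C; [|toC; ring].
    rewrite adm_sum_lin. apply adm_sum_ext. intros n _. unfold X, LL.
    generalize (Cexp (0%R, (cc n * t)%R)) as Z. generalize (w x n) as W.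
    intros [w1 w2] [z1 z2]. unfold Cmult, Cplus, RtoC, Ci, Copp. simpl. f_equal; ring.
Qed.
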